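(* Let $G$ be a vigorous subgroup of $\operatorname{Homeo}(\mathfrak{C})$. Let $A\in K_{\mathfrak{C}}$ and let $C,D$ be clopen subsets of $\mathfrak{C}$ such that $A$, $C$, $D$ are pairwise disjoint and $A\cup C\cup D\neq\mathfrak{C}$. Then $$\operatorname{pstab}_G(A)=\langle \operatorname{pstab}_G(A\cup C)\cup \operatorname{pstab}_G(A\cup D)\rangle.$$
   Context: $\mathfrak{C}$ denotes a Cantor space (a space homeomorphic to $\{0,1\}^\omega$). Groups of homeomorphisms act on the right. $K_{\mathfrak{C}}$ denotes the set of non-empty proper clopen subsets of $\mathfrak{C}$. For $\gamma\in\operatorname{Homeo}(\mathfrak{C})$, $\operatorname{supp}(\gamma)=\{p\in\mathfrak{C}: p\gamma\neq p\}$. For $G\le\operatorname{Homeo}(\mathfrak{C})$ and $A\subseteq\mathfrak{C}$, $\operatorname{pstab}_G(A)=\{g\in G: pg=p \text{ for all } p\in A\}$. A subset $S\subseteq \operatorname{Homeo}(\mathfrak{C})$ is vigorous if for all clopen $A,B,C\subseteq\mathfrak{C}$ with $B,C$ non-empty proper subsets of $A$ there is $\gamma\in S$ with $\operatorname{supp}(\gamma)\subseteq A$ and $B\gamma\subseteq C$. *)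

(* Defs.v *)
(* the Cantor space is the library's [cantor_space]
   (bool^nat with the product topology). *)
From HB Require Import structures.
From mathcomp Require Import all_boot all_order all_algebra.
From mathcomp Require Import all_classical all_reals topology cantor.
Set Implicit Arguments. Unset Strict Implicit. Unset Printing Implicit Defensive.
Local Open Scope classical_set_scope.

Notation CS := cantor_space.

Definition is_homeo (f : CS -> CS) : Prop :=
  continuous f /\ exists g : CS -> CS, [/\ cancel f g, cancel g f & continuous g].

Definition is_homeo_subgroup (H : set (CS -> CS)) : Prop :=
  [/\ (forall f, H f -> is_homeo f),
      H id,
      (forall f g, H f -> H g -> H (g \o f)) &
      (forall f g, H f -> cancel f g -> cancel g f -> H g)].

Definition gen_subgroup (S : set (CS -> CS)) : set (CS -> CS) :=
  fun f => forall H, is_homeo_subgroup H -> S `<=` H -> H f.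

Definition supp (g : CS -> CS) : set CS := [set p | g p <> p].

Definition pstab (G : set (CS -> CS)) (A : set CS) : set (CS -> CS) :=
  [set g | G g /\ forall p, A p -> g p = p].

Definition KC (A : set CS) : Prop := clopen A /\ A !=set0 /\ A <> setT.

Definition vigorous (S : set (CS -> CS)) : Prop :=
  forall A B C : set CS, clopen A -> clopen B -> clopen C ->
    B !=set0 -> B `<=` A -> B <> A ->
    C !=set0 -> C `<=` A -> C <> A ->
    exists2 g, S g & supp g `<=` A /\ g @` B `<=` C.

(* Main.v *)
Require Import Defs.
From mathcomp Require Import all_boot all_order all_algebra.
From mathcomp Require Import all_classical all_reals topology cantor.
From Stdlib Require Import Classical.
Local Open Scope classical_set_scope.

Lemma clC (S : set cantor_space) : clopen S -> clopen (~` S).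
Proof. exact: (@clopenC _ S set0). Qed.
Lemma clU (S T : set cantor_space) : clopen S -> clopen T -> clopen (S `|` T).
Proof. exact: clopenU. Qed.
Lemma clI (S T : set cantor_space) : clopen S -> clopen T -> clopen (S `&` T).
Proof. exact: clopenI. Qed.

Lemma supp_fix (f : cantor_space -> cantor_space) (Z : set cantor_space) p :
  supp f `<=` Z -> ~ Z p -> f p = p.
Proof. move=> sZ nZ; apply: NNPP => h; exact: nZ (sZ _ h). Qed.

Lemma inv_fix (f g : cantor_space -> cantor_space) p :
  cancel f g -> f p = p -> g p = p.
Proof. by move=> fg fp; have := fg p; rewrite fp. Qed.
Arguments inv_fix {f g p}.
Arguments supp_fix {f Z p}.

Lemma pstab_subgroup G A : is_homeo_subgroup G -> is_homeo_subgroup (pstab G A).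
Proof.
case=> Hh Hid Hc Hi; split.
- by move=> f [Gf _]; exact: Hh.
- by split.
- move=> f g [Gf ff] [Gg fg]; split; first exact: Hc.
  by move=> p Ap /=; rewrite ff // fg.
- move=> f g [Gf ff] fg gf; split; first exact: (Hi f).
  by move=> p Ap; apply: (inv_fix fg); exact: ff.
Qed.

Lemma mainL G A C D g :
  is_homeo_subgroup G -> vigorous G ->
  clopen A -> A !=set0 -> clopen C -> clopen D -> C !=set0 -> D !=set0 ->
  (forall p, A p -> C p -> False) -> (forall p, A p -> D p -> False) ->
  (forall p, C p -> D p -> False) ->
  (exists x, ~ A x /\ ~ C x /\ ~ D x) ->
  (exists q, ~ A q /\ ~ C q /\ forall c, C c -> g c <> q) ->
  pstab G A g ->
  forall H, is_homeo_subgroup H -> pstab G (A `|` C) `<=` H ->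
    pstab G (A `|` D) `<=` H -> H g.
Proof.
move=> HG vig clA [a0 Aa0] clCC clDD [c0 Cc0] [d0 Dd0] dAC dAD dCD
  [x0 [nAx [nCx nDx]]] [q [nAq [nCq nq]]] [Gg gA] H HH sC sD.
have HG' := HG; case: HG' => Hh Hid Hc Hi.
set X := ~` (A `|` C `|` D).
have clX : clopen X by apply: clC; apply: clU; [apply: clU|].
have [u0 Gu0 [su0 iu0]] : exists2 u, G u & supp u `<=` ~` A /\ u @` (C `|` D) `<=` X.
  apply: vig => //.
  - exact: clC.
  - exact: clU.
  - by exists c0; left.
  - move=> p [Cp|Dp] Ap; [exact: (dAC p) | exact: (dAD p)].
  - move=> E; have : (~` A) x0 by []. rewrite -E; case=> //.
  - by exists x0 => -[[]|].
  - by move=> p Xp Ap; apply: Xp; left; left.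
  - move=> E; have : X c0 by rewrite E => /(dAC c0); apply.
    by apply; left; right.
have [_ [u0i [cu0 cu0i cont0]]] := Hh u0 Gu0.
set X1 := u0i @^-1` C.
set X2 := u0i @^-1` D.
have clX1 : clopen X1 by exact: preimage_clopen.
have X1X : X1 `<=` X.
  move=> p X1p; rewrite -(cu0i p); apply: iu0; exists (u0i p) => //; by left.
have X2X : X2 `<=` X.
  move=> p X1p; rewrite -(cu0i p); apply: iu0; exists (u0i p) => //; by right.
have X12 : forall p, X1 p -> X2 p -> False by move=> p; apply: dCD.
have X2x : X2 (u0 d0) by rewrite /X2 /= cu0.
have X1c : X1 (u0 c0) by rewrite /X1 /= cu0.
have [_ [gi [cg cgi contg]]] := Hh g Gg.
have ginj := can_inj cg.
have gCA : forall c, C c -> ~ A (g c).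
  move=> c Cc Agc; have := gA _ Agc => /ginj e; apply: (dAC c) => //.
  by rewrite -e.
set R := ~` (A `|` C).
have clR : clopen R by apply: clC; apply: clU.
have [d Gd [sd dg]] : exists2 d, G d & supp d `<=` R /\
    (forall c, C c -> C (d (g c)) \/ X1 (d (g c))).
  set B := R `&` (gi @^-1` C).
  case: (classic (B !=set0)) => [neB|eB].
  - have [d Gd [sd idB]] : exists2 d, G d & supp d `<=` R /\ d @` B `<=` X1.
      apply: vig => //.
      + by apply: clI => //; exact: preimage_clopen.
      + by move=> p [].
      + move=> E; have : R q by move=> [].
        rewrite -E => -[_ /= Cq]; apply: (nq _ Cq); by rewrite cgi.
      + by exists (u0 c0).
      + move=> p /X1X Xp [Ap|Cp]; apply: Xp; left; [by left| by right].
      + move=> E; have : R d0 by move=> [/(dAD d0)|/(dCD d0)]; apply.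
        rewrite -E => /X1X; apply; by right.
    exists d => //; split => // c Cc.
    case: (classic (C (g c))) => Cgc.
    + left; rewrite (supp_fix sd) // => /(_ (or_intror Cgc)) //.
    + right; apply: idB; exists (g c) => //; split.
      * by move=> [/(gCA _ Cc)|].
      * by rewrite /= cg.
  - exists id => //; split; first by move=> p.
    move=> c Cc; left; apply: NNPP => nC; apply: eB; exists (g c); split.
    + by move=> [/(gCA _ Cc)|].
    + by rewrite /= cg.
have [_ [di [cd cdi contd]]] := Hh d Gd.
have dfix : forall p, ~ R p -> d p = p by move=> p; apply: supp_fix.
have dfixA : forall p, A p -> d p = p by move=> p Ap; apply: dfix => /(_ (or_introl Ap)).
have dfixC : forall p, C p -> d p = p by move=> p Cp; apply: dfix => /(_ (or_intror Cp)).
set g1 := d \o g.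
set Z := ~` (C `|` X1).
have ADZ : A `|` D `<=` Z.
  move=> p [Ap|Dp] [Cp|X1p].
  - exact: (dAC p).
  - by apply: (X1X _ X1p); left; left.
  - exact: (dCD p).
  - by apply: (X1X _ X1p); right.
have [u Gu [su iu]] : exists2 u, G u & supp u `<=` Z /\ u @` (A `|` D) `<=` A.
  apply: vig => //.
  - by apply: clC; apply: clU.
  - exact: clU.
  - by exists a0; left.
  - move=> E; have : Z (u0 d0).
      move=> [Cp|X1p]; last exact: (X12 _ X1p X2x).
      by apply: (X2X _ X2x); left; right.
    rewrite -E => -[Ap|Dp]; apply: (X2X _ X2x); [left; left| right] => //.
  - by exists a0.
  - by move=> p Ap; apply: ADZ; left.
  - move=> E; have : Z d0 by apply: ADZ; right.
    by rewrite -E => /(dAD d0); apply.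
have [_ [ui [cu cui contu]]] := Hh u Gu.
have Gi : forall f fi, G f -> cancel f fi -> cancel fi f -> G fi.
  by move=> f fi Gf c1 c2; exact: (Hi f).
set s := ui \o g1 \o u.
set si := ui \o (gi \o di) \o u.
have Gui : G ui by exact: (Gi u).
have Gdi : G di by exact: (Gi d).
have Ggi : G gi by exact: (Gi g).
have Gs : G s by exact: (Hc _ _ Gu (Hc _ _ (Hc _ _ Gg Gd) Gui)).
have Gsi : G si by exact: (Hc _ _ Gu (Hc _ _ (Hc _ _ Gdi Ggi) Gui)).
have csi : cancel s si by move=> p; rewrite /s /si /g1 /= cui cd cg cu.
have cis : cancel si s by move=> p; rewrite /s /si /g1 /= cui cgi cdi cu.
have sAD : pstab G (A `|` D) s.
  split => // p ADp; have Aup : A (u p) by apply: iu; exists p.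
  by rewrite /s /g1 /= gA // dfixA // cu.
have Hs := sD _ sAD.
have g1C : forall c, C c -> s c = g1 c.
  move=> c Cc; rewrite /s /=.
  have -> : u c = c by apply: (supp_fix su) => /(_ (or_introl Cc)).
  apply: (inv_fix cu); apply: (supp_fix su) => /(_ (dg _ Cc)) //.
have Hr : H (si \o g1).
  apply: sC; split; first exact: (Hc _ _ (Hc _ _ Gg Gd) Gsi).
  move=> p [Ap|Cp].
  - rewrite /= /g1 /= gA // dfixA //; apply: (inv_fix csi).
    by case: sAD => _; apply; left.
  - by rewrite /= -g1C // csi.
have Hg1 : H g1.
  have -> : g1 = s \o (si \o g1) by apply: funext => p /=; rewrite cis.
  by case: HH => _ _ HHc _; apply: (HHc).
have Hdi : H di.
  apply: sC; split; first exact: (Gi d).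
  by move=> p [Ap|Cp]; apply: (inv_fix cd); [apply: dfixA|apply: dfixC].
have -> : g = di \o g1 by apply: funext => p /=; rewrite cd.
by case: HH => _ _ HHc _; apply: (HHc).
Qed.

Theorem lemma2p9 (G : set (cantor_space -> cantor_space))
  (A C D : set cantor_space) :
  is_homeo_subgroup G -> vigorous G ->
  KC A -> clopen C -> clopen D ->
  A `&` C = set0 -> A `&` D = set0 -> C `&` D = set0 ->
  A `|` C `|` D <> setT ->
  pstab G A = gen_subgroup (pstab G (A `|` C) `|` pstab G (A `|` D)).
Proof.
move=> HG vig [clA [neA nTA]] clCC clDD eAC eAD eCD nU.
have dAC : forall p, A p -> C p -> False.
  move=> p a c; have : (A `&` C) p by split. by rewrite eAC.
have dAD : forall p, A p -> D p -> False.
  move=> p a c; have : (A `&` D) p by split. by rewrite eAD.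
have dCD : forall p, C p -> D p -> False.
  move=> p a c; have : (C `&` D) p by split. by rewrite eCD.
have [x0 Xx0] : exists x, ~ (A `|` C `|` D) x.
  apply: NNPP => h; apply: nU; rewrite eqEsubset; split => // x _.
  by apply: NNPP => hx; apply: h; exists x.
have nAx : ~ A x0 by move=> a; apply: Xx0; left; left.
have nCx : ~ C x0 by move=> a; apply: Xx0; left; right.
have nDx : ~ D x0 by move=> a; apply: Xx0; right.
rewrite eqEsubset; split; last first.
  move=> g Hg; apply: (Hg (pstab G A)); first exact: pstab_subgroup.
  move=> f [[Gf fA]|[Gf fA]]; split => // p Ap; apply: fA; by left.
move=> g [Gg gA] H HH sS.
have sC : pstab G (A `|` C) `<=` H by move=> f h; apply: sS; left.
have sD : pstab G (A `|` D) `<=` H by move=> f h; apply: sS; right.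
case: (classic (C !=set0)) => [neC|eC]; last first.
  apply: sC; split => // p [Ap|Cp]; [exact: gA| by case: eC; exists p].
case: (classic (D !=set0)) => [neD|eD]; last first.
  apply: sD; split => // p [Ap|Dp]; [exact: gA| by case: eD; exists p].
have [_ [gi [cg cgi contg]]] := (match HG with And4 Hh _ _ _ => Hh end) g Gg.
have ginj := can_inj cg.
case: (classic (exists q, ~ A q /\ ~ C q /\ forall c, C c -> g c <> q)) => [hq|nq].
  apply: (mainL G A C D g HG vig clA neA clCC clDD neC neD dAC dAD dCD _ hq _ H HH sC sD).
  - by exists x0.
  - by split.
apply: (mainL G A D C g HG vig clA neA clDD clCC neD neC dAD dAC _ _ _ _ H HH sD sC).
- by move=> p a b; exact: (dCD p b a).
- by exists x0.
- exists x0; split => //; split => // d Dd e.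
  have gdA : ~ A (g d).
    by move=> a; have := gA _ a => /ginj ed; apply: (dAD d) => //; rewrite -ed.
  have : C (g d).
    apply: NNPP => nC; apply: nq; exists (g d); split => //; split => // c Cc.
    by move=> /ginj ecd; apply: (dCD c) => //; rewrite ecd.
  by rewrite e.
- by split.
Qed.
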